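(* Let $\mathcal{F}$ be the class of all finitary $\mathbb{M}$-algebras. A class $\mathcal{V}$ of $\mathbb{M}$-algebras is a pseudo-variety if, and only if, $\mathcal{V}=\mathrm{Mod}_{\mathcal{F}}(\Phi)$ for some set $\Phi$ of $\mathbb{M}$-inequalities (possibly over several different finite unordered sets $X$).
   Context: Fix a set $\Xi$ of sorts; $\mathsf{Pos}^\Xi$: $\Xi$-sorted families of partial orders with sort-wise monotone maps. $\mathbb{M}$ is a monad on $\mathsf{Pos}^\Xi$ ($\mathrm{flat},\mathrm{sing}$) preserving injective, surjective, bijective functions and preimages and using the standard ordering (order on $\mathbb{M}A$ is $\{(\mathbb{M}p(u),\mathbb{M}q(u)):u\in\mathbb{M}R\}$, $R$ the order of $A$). $\mathbb{M}$-algebras $\langle A,\pi\rangle$: $\pi\circ\mathbb{M}\pi=\pi\circ\mathrm{flat}$, $\pi\circ\mathrm{sing}=\mathrm{id}$; morphisms commute with products. Finitary: sort-wise finite and generated by a finite subset. Quotient of $\mathfrak{B}$: codomain of a surjective morphism from $\mathfrak{B}$. For $\Delta\subseteq\Xi$: $A|_\Delta$ the part with sorts in $\Delta$, $\mathbb{M}|_\Delta A:=(\mathbb{M}(A|_\Delta))|_\Delta$, $\mathfrak{A}|_\Delta$ the $\mathbb{M}|_\Delta$-algebra on $A|_\Delta$ with restricted product. $\mathfrak{B}$ is a sort-accumulation point of $\mathcal{A}$ if for every finite $\Delta\subseteq\Xi$ there is $\mathfrak{A}\in\mathcal{A}$ with $\mathfrak{B}|_\Delta$ a quotient of $\mathfrak{A}|_\Delta$.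 A pseudo-variety is a class of finitary algebras closed under quotients, finitary subalgebras of finite products and sort-accumulation points. Profinitary terms: for a finite unordered set $X$, $\widehat{\mathbb{M}}X$ is the limit (in the comma category under $\mathbb{M}X$) of the diagram of all morphisms $\beta:\mathbb{M}X\to\mathfrak{A}$ with $\mathfrak{A}$ finitary, connected by morphisms $\varphi:\mathfrak{A}\to\mathfrak{B}$; concretely, an element $t\in\widehat{\mathbb{M}}_\xi X$ is a family $(t_\beta)_\beta$ with $t_\beta\in A_\xi$ for $\beta:\mathbb{M}X\to\mathfrak{A}$ such that $\varphi(t_\beta)=t_{\varphi\circ\beta}$ for all morphisms $\varphi$ between finitary algebras, ordered componentwise, and $\mathrm{val}(t;\beta):=t_\beta$. An $\mathbb{M}$-inequality over $X$ is $s\leq t$ with $s,t\in\widehat{\mathbb{M}}X$ of the same sort; a finitary algebra $\mathfrak{A}$ satisfies it if $\mathrm{val}(s;\beta)\leq\mathrm{val}(t;\beta)$ for all morphisms $\beta:\mathbb{M}X\to\mathfrak{A}$. $\mathrm{Mod}_{\mathcal{F}}(\Phi)$ is the class of all $\mathfrak{A}\in\mathcal{F}$ satisfying every inequality in $\Phi$. *)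

(* Defs.v *)
From Stdlib Require Import List ProofIrrelevance.
Unset Implicit Arguments.
Unset Strict Implicit.

Section Defs.
Variable Xi : Type.

Record SPos : Type := {
  car :> Xi -> Type;
  le : forall x : Xi, car x -> car x -> Prop;
  le_refl : forall x (a : car x), le x a a;
  le_trans : forall x (a b c : car x), le x a b -> le x b c -> le x a c;
  le_antisym : forall x (a b : car x), le x a b -> le x b a -> a = b }.

Record SMor (A B : SPos) : Type := {
  app :> forall x : Xi, A x -> B x;
  mono : forall x (a b : A x), le A x a b -> le B x (app x a) (app x b) }.

Definition idm (A : SPos) : SMor A A :=
  {| app := fun x a => a; mono := fun x a b H => H |}.

Definition comp (A B C : SPos) (g : SMor B C) (f : SMor A B) : SMor A C :=
  {| app := fun x a => g x (f x a);
     mono := fun x a b H => mono B C g x _ _ (mono A B f x a b H) |}.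

Arguments app {A B} _ _ _.
Arguments comp {A B C} _ _.
Definition sort_injective (A B : SPos) (f : SMor A B) : Prop :=
  forall x (a b : A x), f x a = f x b -> a = b.
Definition sort_surjective (A B : SPos) (f : SMor A B) : Prop :=
  forall x (b : B x), exists a : A x, f x a = b.

Arguments sort_injective {A B} _.
Arguments sort_surjective {A B} _.

Program Definition sub (A : SPos) (S : forall x, A x -> Prop) : SPos :=
  {| car := fun x => {a : A x | S x a};
     le := fun x a b => le A x (proj1_sig a) (proj1_sig b) |}.
Next Obligation. apply le_refl. Qed.
Next Obligation. eapply le_trans; eauto. Qed.
Next Obligation.
  pose proof (le_antisym A x a b H H0); subst; f_equal; apply proof_irrelevance.
Qed.

Definition incl (A : SPos) (S : forall x, A x -> Prop) : SMor (sub A S) A :=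
  {| app := fun x (a : sub A S x) => proj1_sig a; mono := fun x a b H => H |}.

Program Definition Rel (A : SPos) : SPos :=
  {| car := fun x => {p : A x * A x | le A x (fst p) (snd p)};
     le := fun x a b => le A x (fst (proj1_sig a)) (fst (proj1_sig b)) /\
                        le A x (snd (proj1_sig a)) (snd (proj1_sig b)) |}.
Next Obligation. split; apply le_refl. Qed.
Next Obligation. split; eapply le_trans; eauto. Qed.
Next Obligation.
  simpl in *.
  pose proof (le_antisym A x c1 c H H0); pose proof (le_antisym A x c2 c0 H2 H1).
  subst; f_equal; apply proof_irrelevance.
Qed.

Definition projL (A : SPos) : SMor (Rel A) A :=
  {| app := fun x (a : Rel A x) => fst (proj1_sig a); mono := fun x a b H => proj1 H |}.
Definition projR (A : SPos) : SMor (Rel A) A :=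
  {| app := fun x (a : Rel A x) => snd (proj1_sig a); mono := fun x a b H => proj2 H |}.

Set Implicit Arguments.
Set Strict Implicit.
Record Monad : Type := {
  MO : SPos -> SPos;
  Mf : forall A B : SPos, SMor A B -> SMor (MO A) (MO B);
  sing : forall A : SPos, SMor A (MO A);
  flat : forall A : SPos, SMor (MO (MO A)) (MO A);
  Mf_id : forall A x (u : MO A x), Mf (idm A) x u = u;
  Mf_comp : forall A B C (f : SMor A B) (g : SMor B C) x (u : MO A x),
      Mf (comp g f) x u = Mf g x (Mf f x u);
  sing_nat : forall A B (f : SMor A B) x (a : A x),
      Mf f x (sing A x a) = sing B x (f x a);
  flat_nat : forall A B (f : SMor A B) x (u : MO (MO A) x),
      Mf f x (flat A x u) = flat B x (Mf (Mf f) x u);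
  flat_sing : forall A x (u : MO A x), flat A x (sing (MO A) x u) = u;
  flat_Msing : forall A x (u : MO A x), flat A x (Mf (sing A) x u) = u;
  flat_assoc : forall A x (u : MO (MO (MO A)) x),
      flat A x (flat (MO A) x u) = flat A x (Mf (flat A) x u) }.

Variable M : Monad.

Definition preserves_injective : Prop :=
  forall A B (f : SMor A B), sort_injective f -> sort_injective (Mf M f).
Definition preserves_surjective : Prop :=
  forall A B (f : SMor A B), sort_surjective f -> sort_surjective (Mf M f).
Definition preserves_bijective : Prop :=
  forall A B (f : SMor A B), sort_injective f /\ sort_surjective f ->
    sort_injective (Mf M f) /\ sort_surjective (Mf M f).
(* M(f^-1(S)) = (Mf)^-1(M S), both viewed as subsets of M A via inclusions *)
Definition preserves_preimages : Prop :=
  forall A B (f : SMor A B) (S : forall x, B x -> Prop) x (u : MO M A x),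
    (exists v : MO M (sub B S) x, Mf M (incl B S) x v = Mf M f x u) <->
    (exists w : MO M (sub A (fun y a => S y (f y a))) x,
        Mf M (incl A (fun y a => S y (f y a))) x w = u).
Definition standard_ordering : Prop :=
  forall A x (a b : MO M A x),
    le (MO M A) x a b <->
    exists u : MO M (Rel A) x, Mf M (projL A) x u = a /\ Mf M (projR A) x u = b.

Definition good_monad : Prop :=
  preserves_injective /\ preserves_surjective /\ preserves_bijective /\
  preserves_preimages /\ standard_ordering.

Record Alg : Type := {
  acar :> SPos;
  prod : SMor (MO M acar) acar;
  prod_assoc : forall x (u : MO M (MO M acar) x),
      prod x (Mf M prod x u) = prod x (flat M acar x u);
  prod_unit : forall x (a : acar x), prod x (sing M acar x a) = a }.

Definition is_alg_hom (A B : Alg) (h : SMor A B) : Prop :=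
  forall x (u : MO M A x), h x (prod A x u) = prod B x (Mf M h x u).

Arguments is_alg_hom {A B} _.

Record AlgHom (A B : Alg) : Type := {
  ahom :> SMor A B;
  ahom_spec : is_alg_hom ahom }.

Definition sortwise_finite (A : SPos) : Prop :=
  forall x, exists l : list (A x), forall a : A x, In a l.

Definition closed_subset (A : Alg) (S : forall x, A x -> Prop) : Prop :=
  forall x (u : MO M (sub A S) x), S x (prod A x (Mf M (incl A S) x u)).

Arguments closed_subset {A} _.

Definition finitely_generated (A : Alg) : Prop :=
  exists C : list {x : Xi & A x},
    forall S : forall x, A x -> Prop,
      (forall c, In c C -> S (projT1 c) (projT2 c)) -> closed_subset S ->
      forall x (a : A x), S x a.

Definition finitary (A : Alg) : Prop :=
  sortwise_finite A /\ finitely_generated A.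

Definition is_quotient_of (B A : Alg) : Prop :=
  exists h : AlgHom A B, sort_surjective h.

Definition restr (A : SPos) (D : list Xi) : SPos := sub A (fun x _ => In x D).

(* h : A|D -> B|D is a morphism of M|D-algebras (restricted products) *)
Definition is_restr_hom (A B : Alg) (D : list Xi)
    (h : SMor (restr A D) (restr B D)) : Prop :=
  forall x (Hx : In x D) (u : MO M (restr A D) x),
    proj1_sig (h x (exist _ (prod A x (Mf M (incl A _) x u)) Hx)) =
    prod B x (Mf M (incl B _) x (Mf M h x u)).

Arguments is_restr_hom {A B D} _.

Definition restr_is_quotient (B A : Alg) (D : list Xi) : Prop :=
  exists h : SMor (restr A D) (restr B D), is_restr_hom h /\ sort_surjective h.

Definition sort_accumulation_point (V : Alg -> Prop) (B : Alg) : Prop :=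
  forall D : list Xi, exists A : Alg, V A /\ restr_is_quotient B A D.

Definition closed_quotients (V : Alg -> Prop) : Prop :=
  forall A B : Alg, V A -> is_quotient_of B A -> V B.

(* B is (isomorphic to) a subalgebra of the finite product of the A i:
   a family of morphisms B -> A i that is jointly an order embedding *)
Definition closed_fin_subproducts (V : Alg -> Prop) : Prop :=
  forall (I : Type) (enumI : list I), (forall i, In i enumI) ->
  forall (A : I -> Alg), (forall i, V (A i)) ->
  forall (B : Alg), finitary B ->
  forall (h : forall i, AlgHom B (A i)),
    (forall x (b b' : B x), (forall i, le (A i) x (h i x b) (h i x b')) -> le B x b b') ->
    V B.

Definition closed_accumulation (V : Alg -> Prop) : Prop :=
  forall B : Alg, finitary B -> sort_accumulation_point V B -> V B.

Definition pseudo_variety (V : Alg -> Prop) : Prop :=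
  (forall A, V A -> finitary A) /\ closed_quotients V /\
  closed_fin_subproducts V /\ closed_accumulation V.

Record FinSorted : Type := {
  fT : Type;
  fenum : list fT;
  fenum_all : forall t : fT, In t fenum;
  fsort : fT -> Xi }.

Program Definition DX (X : FinSorted) : SPos :=
  {| car := fun x => {t : fT X | fsort X t = x};
     le := fun x a b => a = b |}.
Next Obligation. intros; subst; try reflexivity; try (f_equal; apply proof_irrelevance). Qed.

Record FreeHom (X : FinSorted) (A : Alg) : Type := {
  fhom :> SMor (MO M (DX X)) A;
  fhom_spec : forall x (u : MO M (MO M (DX X)) x),
      fhom x (flat M (DX X) x u) = prod A x (Mf M fhom x u) }.

Lemma compFree_spec (X : FinSorted) (A B : Alg) (phi : AlgHom A B) (b : FreeHom X A) :
  forall x (u : MO M (MO M (DX X)) x),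
    comp phi b x (flat M (DX X) x u) = prod B x (Mf M (comp phi b) x u).
Proof.
  intros x u; simpl. rewrite (fhom_spec b), (ahom_spec phi), Mf_comp. reflexivity.
Qed.

Definition compFree (X : FinSorted) (A B : Alg) (phi : AlgHom A B) (b : FreeHom X A)
  : FreeHom X B := {| fhom := comp phi b; fhom_spec := compFree_spec phi b |}.

Definition hatM (X : FinSorted) (x : Xi) : Type :=
  { t : forall A : Alg, finitary A -> FreeHom X A -> A x |
    forall (A B : Alg) (HA : finitary A) (HB : finitary B) (phi : AlgHom A B)
           (b : FreeHom X A),
      phi x (t A HA b) = t B HB (compFree phi b) }.

Definition val (X : FinSorted) (x : Xi) (t : hatM X x) (A : Alg) (HA : finitary A)
  (b : FreeHom X A) : A x := proj1_sig t A HA b.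

Record Ineq : Type := {
  iX : FinSorted;
  isort : Xi;
  ilhs : hatM iX isort;
  irhs : hatM iX isort }.

Definition satisfies (A : Alg) (HA : finitary A) (e : Ineq) : Prop :=
  forall b : FreeHom (iX e) A,
    le A (isort e) (val (ilhs e) HA b) (val (irhs e) HA b).

Definition Mod (Phi : Ineq -> Prop) (A : Alg) : Prop :=
  exists HA : finitary A, forall e, Phi e -> satisfies HA e.

End Defs.

(* Main.v *)
From Stdlib Require Import List Classical ClassicalEpsilon FunctionalExtensionality PropExtensionality ProofIrrelevance.
From mathcomp Require classical_sets filter.
Require Import Defs.
Set Bullet Behavior "Strict Subproofs".

Lemma my_ultra (T : Type) (F : (T -> Prop) -> Prop) :
  F (fun _ => True) ->
  (forall A B, F A -> F B -> F (fun x => A x /\ B x)) ->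
  (forall A B : T -> Prop, (forall x, A x -> B x) -> F A -> F B) ->
  (forall A, F A -> exists x, A x) ->
  exists U : (T -> Prop) -> Prop,
    (forall A, F A -> U A) /\
    (forall A B, U A -> U B -> U (fun x => A x /\ B x)) /\
    (forall A B : T -> Prop, (forall x, A x -> B x) -> U A -> U B) /\
    (forall A, U A -> exists x, A x) /\
    (forall A, U A \/ U (fun x => ~ A x)).
Proof.
  intros HT HI HS HE.
  assert (PF : filter.ProperFilter F).
  { constructor.
    - intro H. destruct (HE _ H) as [x []].
    - constructor; [exact HT | intros A B; apply HI | intros P Q; apply HS]. }
  destruct (@filter.ultraFilterLemma _ F PF) as [G [UG sub]].
  exists G. pose proof (@filter.ultra_proper _ _ UG) as PG.
  destruct PG as [ne FG]. destruct FG as [GT GI GS].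
  split; [exact sub|]. split; [intros A B; apply GI|]. split; [intros A B; apply GS|].
  split.
  - intros A HA. apply NNPP. intro N. apply ne.
    apply (GS A); [|exact HA]. intros x Ax. apply N. exists x. exact Ax.
  - intro A. exact (@filter.in_ultra_setVsetC _ _ A UG).
Qed.

Section Main.
Variable Xi : Type.
Variable M : Monad Xi.
Hypothesis Hsurj : preserves_surjective M.
Notation cmp g f := (comp Xi _ _ _ g f).
Notation ssurj f := (sort_surjective Xi _ _ f).

Lemma smor_ext (A B : SPos Xi) (f g : SMor Xi A B) :
  (forall x a, f x a = g x a) -> f = g.
Proof.
  intros H. destruct f as [f fm], g as [g gm]; simpl in H.
  assert (E : f = g).
  { apply functional_extensionality_dep; intro x; apply functional_extensionality; intro a; apply H. }
  subst g. f_equal. apply proof_irrelevance.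
Qed.

Lemma freehom_ext (X : FinSorted Xi) (A : Alg M) (b c : FreeHom X A) :
  (forall x u, b x u = c x u) -> b = c.
Proof.
  intros H. destruct b as [b bs], c as [c cs]; simpl in H.
  assert (E : b = c) by (apply smor_ext; exact H).
  subst c. f_equal. apply proof_irrelevance.
Qed.

Lemma Mf_ext (A B : SPos Xi) (f g : SMor Xi A B) :
  (forall x a, f x a = g x a) -> forall x u, Mf M f x u = Mf M g x u.
Proof. intros H; rewrite (smor_ext _ _ f g H); reflexivity. Qed.

Definition idAlg (A : Alg M) : AlgHom A A.
Proof.
  refine {| ahom := idm Xi A |}.
  intros x u. simpl. rewrite Mf_id. reflexivity.
Defined.

Lemma val_comp (X : FinSorted Xi) (x : Xi) (t : hatM M X x) (A B : Alg M)
  (HA : finitary A) (HB : finitary B) (phi : AlgHom A B) (b : FreeHom X A) :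
  phi x (val t HA b) = val t HB (compFree phi b).
Proof. unfold val. apply (proj2_sig t). Qed.

Lemma val_irrel (X : FinSorted Xi) (x : Xi) (t : hatM M X x) (A : Alg M)
  (HA HA' : finitary A) (b : FreeHom X A) : val t HA b = val t HA' b.
Proof.
  pose proof (val_comp X x t A A HA HA' (idAlg A) b) as E. simpl in E. rewrite E.
  f_equal. apply freehom_ext. intros; reflexivity.
Qed.

Lemma free_unique (X : FinSorted Xi) (A : Alg M) (b : FreeHom X A) x u :
  b x u = prod A x (Mf M (cmp b (sing M (DX X))) x u).
Proof.
  rewrite Mf_comp. rewrite <- fhom_spec. rewrite flat_Msing. reflexivity.
Qed.

Definition extS {X : FinSorted Xi} {A : Alg M} (a0 : SMor Xi (DX X) A)
  : SMor Xi (MO M (DX X)) A := cmp (prod A) (Mf M a0).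

Lemma extS_spec {X : FinSorted Xi} {A : Alg M} (a0 : SMor Xi (DX X) A) :
  forall x (u : MO M (MO M (DX X)) x),
    extS a0 x (flat M (DX X) x u) = prod A x (Mf M (extS a0) x u).
Proof.
  intros x u. unfold extS. simpl. rewrite flat_nat. rewrite <- prod_assoc.
  rewrite Mf_comp. reflexivity.
Qed.

Definition extF {X : FinSorted Xi} {A : Alg M} (a0 : SMor Xi (DX X) A) : FreeHom X A :=
  {| fhom := extS a0; fhom_spec := extS_spec a0 |}.

Lemma lift_surj (A B : SPos Xi) (f : SMor Xi A B) :
  ssurj f -> forall x (w : MO M B x), exists w', Mf M f x w' = w.
Proof. intros H x w. apply (Hsurj _ _ f H). Qed.

Definition mkDX {X : FinSorted Xi} {A : SPos Xi} (f : forall x, DX X x -> A x) : SMor Xi (DX X) A.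
Proof.
  refine (Build_SMor Xi _ _ (f) _).
  intros x a b H. simpl in H. subst b. apply le_refl.
Defined.


Lemma pick_list (K U : Type) (Q : K -> U -> Prop) (l : list K) :
  exists lu, forall k, In k l -> (exists u, Q k u) -> exists u, In u lu /\ Q k u.
Proof.
  induction l as [|k l IH].
  - exists nil. intros k [].
  - destruct IH as [lu Hlu]. destruct (classic (exists u, Q k u)) as [[u Hu]|N].
    + exists (u :: lu). intros k' [<-|Hk'] Hex.
      * exists u; split; [left; reflexivity|exact Hu].
      * destruct (Hlu k' Hk' Hex) as [u' [H1 H2]]; exists u'; split; [right; exact H1|exact H2].
    + exists lu. intros k' [<-|Hk'] Hex; [contradiction|]. apply Hlu; assumption.
Qed.

Section Image.
Variable X : FinSorted Xi.
Variable I : Type.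
Variable B : I -> Alg M.
Variable beta : forall i, FreeHom X (B i).

Let MX := MO M (DX X).

Definition cls x (u : MX x) : MX x -> Prop := fun v => forall i, beta i x v = beta i x u.

Definition Ccar (x : Xi) : Type := {S : MX x -> Prop | exists u, S = cls x u}.

Definition rep x (S : Ccar x) : MX x :=
  proj1_sig (constructive_indefinite_description _ (proj2_sig S)).

Lemma rep_spec x (S : Ccar x) : proj1_sig S = cls x (rep x S).
Proof. unfold rep. destruct (constructive_indefinite_description _ _). simpl. exact e. Qed.

Definition piF i x (S : Ccar x) : B i x := beta i x (rep x S).

Lemma pi_inj x (S T : Ccar x) : (forall i, piF i x S = piF i x T) -> S = T.
Proof.
  intros H.
  assert (E : proj1_sig S = proj1_sig T).
  { rewrite (rep_spec x S), (rep_spec x T).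
    apply functional_extensionality; intro v. apply propositional_extensionality.
    unfold cls, piF in *. split; intros Hv i; rewrite Hv; [|symmetry]; apply H. }
  destruct S as [S HS], T as [T HT]. simpl in E. subst T. f_equal. apply proof_irrelevance.
Qed.

Definition gfun x (u : MX x) : Ccar x := exist _ (cls x u) (ex_intro _ u eq_refl).

Lemma pi_g i x u : piF i x (gfun x u) = beta i x u.
Proof.
  unfold piF. pose proof (rep_spec x (gfun x u)) as E. simpl in E.
  assert (H : cls x u u) by (intro; reflexivity).
  rewrite E in H. symmetry. apply H.
Qed.

Definition Cle x (S T : Ccar x) : Prop := forall i, le Xi (B i) x (piF i x S) (piF i x T).

Definition CP : SPos Xi.
Proof.
  refine {| car := Ccar; le := Cle |}.
  - intros x a i. apply le_refl.
  - intros x a b c H1 H2 i. eapply le_trans; [apply H1|apply H2].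
  - intros x a b H1 H2. apply pi_inj. intro i. apply le_antisym; [apply H1|apply H2].
Defined.

Definition piS i : SMor Xi CP (B i).
Proof. refine (Build_SMor Xi CP (B i) (piF i) _). intros x a b H. apply H. Defined.

Definition gS : SMor Xi MX CP.
Proof.
  refine (Build_SMor Xi MX CP gfun _).
  intros x a b H i. simpl. rewrite !pi_g. apply mono. exact H.
Defined.

Lemma gS_surj : ssurj gS.
Proof.
  intros x S. exists (rep x S). apply pi_inj. intro i. simpl. rewrite pi_g. reflexivity.
Qed.

Lemma comp_pi_g i : cmp (piS i) gS = beta i.
Proof. apply smor_ext. intros x a. simpl. apply pi_g. Qed.

Definition prodP x (w : MO M CP x) : MX x -> Prop :=
  fun v => forall i, beta i x v = prod (B i) x (Mf M (piS i) x w).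

Lemma prodP_ok x w : exists u, prodP x w = cls x u.
Proof.
  destruct (lift_surj _ _ gS gS_surj x w) as [w' Hw'].
  exists (flat M (DX X) x w').
  assert (K : forall i, beta i x (flat M (DX X) x w') = prod (B i) x (Mf M (piS i) x w)).
  { intro i. rewrite fhom_spec. rewrite <- Hw'. rewrite <- Mf_comp. rewrite comp_pi_g. reflexivity. }
  apply functional_extensionality; intro v. apply propositional_extensionality.
  unfold prodP, cls. split; intros Hv i; rewrite Hv; [symmetry|]; apply K.
Qed.

Definition prodF x (w : MO M CP x) : CP x := exist _ (prodP x w) (prodP_ok x w).

Lemma pi_prod i x w : piF i x (prodF x w) = prod (B i) x (Mf M (piS i) x w).
Proof.
  unfold piF. pose proof (rep_spec x (prodF x w)) as E. simpl in E.
  assert (H : cls x (rep x (prodF x w)) (rep x (prodF x w))) by (intro; reflexivity).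
  rewrite <- E in H. apply H.
Qed.

Definition prodS : SMor Xi (MO M CP) CP.
Proof.
  refine (Build_SMor Xi (MO M CP) CP prodF _).
  intros x a b H i. simpl. rewrite !pi_prod. apply mono. apply mono. exact H.
Defined.

Definition CAlg : Alg M.
Proof.
  refine {| acar := CP; prod := prodS |}.
  - intros x u. apply pi_inj. intro i. simpl. rewrite !pi_prod.
    rewrite <- Mf_comp.
    assert (E : cmp (piS i) prodS = cmp (prod (B i)) (Mf M (piS i))).
    { apply smor_ext. intros y a. simpl. apply pi_prod. }
    rewrite E. rewrite Mf_comp. rewrite prod_assoc. rewrite <- flat_nat. reflexivity.
  - intros x a. apply pi_inj. intro i. simpl. rewrite pi_prod. rewrite sing_nat.
    rewrite prod_unit. reflexivity.
Defined.

Definition piA i : AlgHom CAlg (B i).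
Proof. refine {| ahom := (piS i : SMor Xi CAlg (B i)) |}. intros x u. simpl. apply pi_prod. Defined.

Lemma gF_spec : forall x (u : MO M (MO M (DX X)) x),
  gS x (flat M (DX X) x u) = prod CAlg x (Mf M gS x u).
Proof.
  intros x u. apply pi_inj. intro i. simpl. rewrite pi_g, pi_prod.
  rewrite <- Mf_comp. rewrite comp_pi_g. apply fhom_spec.
Qed.

Definition gF : FreeHom X CAlg := {| fhom := (gS : SMor Xi (MO M (DX X)) CAlg); fhom_spec := gF_spec |}.

Lemma compFree_pi i : compFree (piA i) gF = beta i.
Proof. apply freehom_ext. intros x u. simpl. apply pi_g. Qed.

Lemma g_rep x (c : CAlg x) : gfun x (rep x c) = c.
Proof. apply pi_inj. intro i. rewrite pi_g. reflexivity. Qed.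


Lemma fin_classes (HBf : forall i, finitary (B i)) x (L : list I) :
  exists l : list (MX x), forall u, exists w, In w l /\ forall i, In i L -> beta i x u = beta i x w.
Proof.
  induction L as [|i L IH].
  - destruct (classic (exists u : MX x, True)) as [[u0 _]|N].
    + exists (u0 :: nil). intro u. exists u0. split; [left; reflexivity|intros i []].
    + exists nil. intro u. exfalso. apply N. exists u. exact Logic.I.
  - destruct IH as [l' Hl'].
    destruct (proj1 (HBf i) x) as [lb Hlb].
    destruct (pick_list (MX x * B i x) (MX x)
      (fun k u => (forall j, In j L -> beta j x u = beta j x (fst k)) /\ beta i x u = snd k)
      (list_prod l' lb)) as [lu Hlu].
    exists lu. intro u. destruct (Hl' u) as [w [Hw1 Hw2]].
    destruct (Hlu (w, beta i x u)) as [u' [Hu'1 [Hu'2 Hu'3]]].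
    + apply in_prod; [exact Hw1|apply Hlb].
    + exists u. split; [exact Hw2|reflexivity].
    + exists u'. split; [exact Hu'1|]. simpl in *. intros j [<-|Hj].
      * symmetry; exact Hu'3.
      * rewrite (Hw2 j Hj). symmetry. apply Hu'2. exact Hj.
Qed.

Lemma gen_in (S : forall x, CAlg x -> Prop)
  (HC : forall c, In c (map (fun d => existT (fun x => CAlg x) (fsort X d)
            (gfun (fsort X d) (sing M (DX X) (fsort X d)
               (exist (fun t => fsort X t = fsort X d) d eq_refl)))) (fenum X)) ->
          S (projT1 c) (projT2 c))
  y (d : DX X y) : S y (gfun y (sing M (DX X) y d)).
Proof.
  destruct d as [t Ht]. subst y.
  apply (HC (existT (fun x => CAlg x) (fsort X t)
            (gfun (fsort X t) (sing M (DX X) (fsort X t)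
               (exist (fun t' => fsort X t' = fsort X t) t eq_refl))))).
  apply in_map_iff. exists t. split; [reflexivity|apply fenum_all].
Qed.

Lemma CAlg_finitary (enumI : list I) (HI : forall i, In i enumI)
  (HBf : forall i, finitary (B i)) : finitary CAlg.
Proof.
  split.
  - intro x. destruct (fin_classes HBf x enumI) as [l Hl].
    exists (map (gfun x) l). intro c. rewrite <- (g_rep x c).
    destruct (Hl (rep x c)) as [w [Hw1 Hw2]].
    apply in_map_iff. exists w. split; [|exact Hw1].
    apply pi_inj. intro i. rewrite !pi_g. symmetry. apply Hw2. apply HI.
  - exists (map (fun d => existT (fun x => CAlg x) (fsort X d)
            (gfun (fsort X d) (sing M (DX X) (fsort X d)
               (exist (fun t => fsort X t = fsort X d) d eq_refl)))) (fenum X)).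
    intros S HC Hcl x a.
    pose (k := @mkDX X (sub Xi CAlg S) (fun y d => exist _ (gfun y (sing M (DX X) y d)) (gen_in S HC y d))).
    rewrite <- (g_rep x a). set (u := rep x a).
    assert (E : prod CAlg x (Mf M (incl Xi CAlg S) x (Mf M k x u)) = gfun x u).
    { apply pi_inj. intro i. simpl. rewrite pi_prod, pi_g. rewrite <- !Mf_comp.
      rewrite (free_unique X (B i) (beta i) x u). f_equal. apply Mf_ext.
      intros y d. simpl. apply pi_g. }
    rewrite <- E. apply Hcl.
Qed.

End Image.

Arguments CAlg X [I] B beta.
Arguments gF X [I] B beta.
Arguments piA X [I] B beta i.
Arguments piF X [I] B beta i x S.
Arguments rep X [I] B beta x S.
Arguments gfun X [I] B beta x u.

Lemma quotient_finitary (A B : Alg M) (h : AlgHom A B) :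
  ssurj h -> finitary A -> finitary B.
Proof.
  intros Hs [Hf Hg]. split.
  - intro x. destruct (Hf x) as [l Hl]. exists (map (h x) l). intro b.
    destruct (Hs x b) as [a <-]. apply in_map. apply Hl.
  - destruct Hg as [C HC].
    exists (map (fun c => existT (fun x => B x) (projT1 c) (h (projT1 c) (projT2 c))) C).
    intros S HS Hcl x b.
    assert (All : forall x a, S x (h x a)).
    { apply (HC (fun x a => S x (h x a))).
      - intros c Hc. apply (HS (existT (fun x => B x) (projT1 c) (h _ (projT2 c)))).
        apply in_map_iff. exists c; split; auto.
      - intros y w.
        assert (km : forall z (a b : sub Xi A (fun x a => S x (h x a)) z),
                   le Xi _ z a b ->
                   le Xi (sub Xi B S) z (exist _ (h z (proj1_sig a)) (proj2_sig a))
                                        (exist _ (h z (proj1_sig b)) (proj2_sig b))).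
        { intros z a b0 H. simpl. apply mono. exact H. }
        pose (k := Build_SMor Xi (sub Xi A (fun x a => S x (h x a))) (sub Xi B S)
                     (fun z a => exist _ (h z (proj1_sig a)) (proj2_sig a)) km).
        rewrite (ahom_spec h). rewrite <- Mf_comp.
        assert (Ek : cmp (ahom h) (incl Xi A (fun x a => S x (h x a))) = cmp (incl Xi B S) k)
          by (apply smor_ext; reflexivity).
        rewrite Ek. rewrite Mf_comp. apply Hcl. }
    destruct (Hs x b) as [a <-]. apply All.
Qed.

Lemma lift_free (X : FinSorted Xi) (A B : Alg M) (h : AlgHom A B) :
  ssurj h -> forall beta : FreeHom X B, exists alpha : FreeHom X A, compFree h alpha = beta.
Proof.
  intros Hs beta.
  pose (a0f := fun y (d : DX X y) =>
     proj1_sig (constructive_indefinite_description _ (Hs y (beta y (sing M (DX X) y d))))).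
  exists (extF (mkDX a0f)). apply freehom_ext. intros x u. simpl.
  rewrite (ahom_spec h). rewrite <- Mf_comp. rewrite (free_unique X B beta x u). f_equal.
  apply Mf_ext. intros y d. simpl. unfold a0f.
  destruct (constructive_indefinite_description _ _). simpl. exact e.
Qed.

Lemma dir2 (V : Alg M -> Prop) (Phi : Ineq M -> Prop)
  (HV : forall A, V A <-> Mod Phi A) : pseudo_variety V.
Proof.
  split; [|split; [|split]].
  - intros A HA. destruct (proj1 (HV A) HA) as [F _]; exact F.
  - intros A B HA [h Hs]. apply HV. destruct (proj1 (HV A) HA) as [FA SA].
    exists (quotient_finitary A B h Hs FA). intros e He b.
    destruct (lift_free (iX e) A B h Hs b) as [alpha <-].
    rewrite <- !(val_comp (iX e) (isort e) _ A B FA _ h alpha).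
    apply mono. apply SA; exact He.
  - intros I enumI HI A HA B HBf h Hrefl. apply HV. exists HBf. intros e He b.
    apply Hrefl. intro i. destruct (proj1 (HV (A i)) (HA i)) as [Fi Si].
    rewrite !(val_comp _ _ _ B (A i) HBf Fi (h i) b). apply Si; exact He.
  - intros B HBf Hacc. apply HV. exists HBf. intros e He beta.
    destruct e as [X y s t]. simpl in beta |- *.
    set (D := y :: map (fsort X) (fenum X)).
    destruct (Hacc D) as [A [HVA [h [Hh Hs]]]].
    destruct (proj1 (HV A) HVA) as [FA SA].
    assert (inD : forall x (d : DX X x), In x D).
    { intros x [t0 Ht]. simpl in Ht. subst x. right. apply in_map. apply fenum_all. }
    pose (a1f := fun z (d : DX X z) => proj1_sig (constructive_indefinite_description _
                   (Hs z (exist (fun _ => In z D) (beta z (sing M (DX X) z d)) (inD z d))))).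
    pose (a1 := @mkDX X (restr A D) a1f).
    pose (alpha := extF (cmp (incl Xi A (fun x _ => In x D)) a1)).
    assert (K : forall x (Hx : In x D) u,
               proj1_sig (h x (exist _ (alpha x u) Hx)) = beta x u).
    { intros x Hx u.
      change (proj1_sig (h x (exist (fun _ => In x D) (prod A x (Mf M (cmp (incl Xi A (fun x _ => In x D)) a1) x u)) Hx)) = beta x u).
      rewrite Mf_comp. etransitivity; [apply (Hh x Hx (Mf M a1 x u))|]. rewrite <- !Mf_comp.
      rewrite (free_unique _ B beta x u). f_equal. apply Mf_ext. intros z d. simpl.
      unfold a1f. destruct (constructive_indefinite_description _ _) as [a Ha]. simpl.
      rewrite Ha. reflexivity. }
    pose (Bb := fun b : bool => if b then A else B).
    pose (betab := fun b : bool => match b return FreeHom X (Bb b) with true => alpha | false => beta end).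
    assert (HCf : finitary (CAlg X Bb betab)).
    { apply (CAlg_finitary X bool Bb betab (true :: false :: nil)).
      - intros [|]; simpl; auto.
      - intros [|]; assumption. }
    assert (Hy : In y D) by (left; reflexivity).
    assert (E : forall r : hatM M X y,
       val r HBf beta = proj1_sig (h y (exist _ (val r FA alpha) Hy))).
    { intro r.
      pose proof (val_comp X y r _ (Bb false) HCf HBf (piA X Bb betab false) (gF X Bb betab)) as E1.
      pose proof (val_comp X y r _ (Bb true) HCf FA (piA X Bb betab true) (gF X Bb betab)) as E2.
      rewrite compFree_pi in E1, E2. simpl in E1, E2. rewrite <- E1, <- E2.
      unfold piF. rewrite K. reflexivity. }
    rewrite !E. apply (mono Xi _ _ h y (exist (fun _ => In y D) (val s FA alpha) Hy) (exist (fun _ => In y D) (val t FA alpha) Hy)). simpl.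
    apply (SA _ He alpha).
Qed.

Lemma list_sig (T : Type) (P : T -> Prop) (l : list T) :
  (forall t, P t -> In t l) -> exists l' : list {t | P t}, forall i, In i l'.
Proof.
  intros Hl.
  assert (G : exists l' : list {t | P t}, forall t (H : P t), In t l -> In (exist P t H) l').
  { clear Hl. induction l as [|a l IH].
    - exists nil. intros t H [].
    - destruct IH as [l' Hl']. destruct (classic (P a)) as [Ha|Na].
      + exists (exist P a Ha :: l'). intros t H [<-|Ht].
        * left. f_equal. apply proof_irrelevance.
        * right. apply Hl'. exact Ht.
      + exists l'. intros t H [<-|Ht]; [contradiction|]. apply Hl'. exact Ht. }
  destruct G as [l' Hl']. exists l'. intros [t H]. apply Hl'. apply Hl. exact H.
Qed.

Lemma gens (A : Alg M) (HA : finitary A) : exists (X : FinSorted Xi) (e : FreeHom X A), ssurj e.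
Proof.
  destruct HA as [_ [C HC]].
  destruct (list_sig _ (fun c => In c C) C (fun t H => H)) as [l Hl].
  pose (X := {| fT := {c | In c C}; fenum := l; fenum_all := Hl;
                fsort := fun c : {c | In c C} => projT1 (proj1_sig c) |}).
  pose (e0f := fun y (d : DX X y) =>
     eq_rect (fsort X (proj1_sig d)) (fun y => A y) (projT2 (proj1_sig (proj1_sig d))) y (proj2_sig d)).
  pose (e := extF (@mkDX X A e0f)).
  exists X, e.
  assert (All : forall y a, exists u, e y u = a).
  { apply (HC (fun y a => exists u, e y u = a)).
    - intros c Hc.
      exists (sing M (DX X) (projT1 c) (exist (fun t => fsort X t = projT1 c) (exist _ c Hc : fT X) eq_refl)).
      simpl. rewrite sing_nat. rewrite prod_unit. reflexivity.
    - intros y w.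
      assert (km : forall z (u v : MO M (DX X) z), le Xi _ z u v ->
          le Xi (sub Xi A (fun y a => exists u, e y u = a)) z
             (exist _ (e z u) (ex_intro _ u eq_refl)) (exist _ (e z v) (ex_intro _ v eq_refl))).
      { intros z u v H. simpl. apply mono. apply mono. exact H. }
      pose (k := Build_SMor Xi (MO M (DX X)) (sub Xi A (fun y a => exists u, e y u = a))
                   (fun z u => exist _ (e z u) (ex_intro _ u eq_refl)) km).
      assert (ks : ssurj k).
      { intros z [a [u Hu]]. exists u. subst a. simpl. f_equal; apply proof_irrelevance. }
      destruct (lift_surj _ _ k ks y w) as [w' <-].
      exists (flat M (DX X) y w'). rewrite fhom_spec. rewrite <- Mf_comp. f_equal. apply Mf_ext. intros; reflexivity. }
  intros y a. apply All.
Qed.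

Definition PhiV (V : Alg M -> Prop) (e : Ineq M) : Prop :=
  forall B (HB : finitary B), V B -> satisfies HB e.

Lemma image_in_V (V : Alg M -> Prop) (Hfin : forall A, V A -> finitary A)
  (Hsp : closed_fin_subproducts V) (X : FinSorted Xi) (I : Type) (enumI : list I)
  (HI : forall i, In i enumI) (B : I -> Alg M) (beta : forall i, FreeHom X (B i))
  (HV : forall i, V (B i)) :
  { HC : finitary (CAlg X B beta) | V (CAlg X B beta) }.
Proof.
  assert (HCf : finitary (CAlg X B beta)).
  { apply (CAlg_finitary X I B beta enumI HI). intro i. apply Hfin. apply HV. }
  exists HCf.
  apply (Hsp I enumI HI B HV (CAlg X B beta) HCf (fun i => piA X B beta i)).
  intros x b b' H. exact H.
Qed.

Lemma KC (V : Alg M -> Prop) (Hfin : forall A, V A -> finitary A)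
  (Hsp : closed_fin_subproducts V) (A : Alg M) (FA : finitary A)
  (SA : forall e, PhiV V e -> satisfies FA e) (X : FinSorted Xi) (e : FreeHom X A)
  y (a a' : A y) (Nle : ~ le Xi A y a a') :
  exists j : {B : Alg M & FreeHom X B}, V (projT1 j) /\
    forall u v, e y u = a -> e y v = a' -> ~ le Xi (projT1 j) y (projT2 j y u) (projT2 j y v).
Proof.
  apply NNPP; intro N.
  assert (H : forall j : {B : Alg M & FreeHom X B}, V (projT1 j) ->
            exists u v, e y u = a /\ e y v = a' /\ le Xi (projT1 j) y (projT2 j y u) (projT2 j y v)).
  { intros j Vj. apply NNPP; intro N2. apply N. exists j. split; [exact Vj|].
    intros u v Hu Hv Hle. apply N2. exists u, v. auto. }
  clear N.
  pose (T := (MO M (DX X) y * MO M (DX X) y)%type).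
  pose (J := {B : Alg M & FreeHom X B}).
  pose (Fset := fun (L : list J) (p : T) => e y (fst p) = a /\ e y (snd p) = a' /\
          forall j, In j L -> le Xi (projT1 j) y (projT2 j y (fst p)) (projT2 j y (snd p))).
  pose (Filt := fun S : T -> Prop => exists L, (forall j, In j L -> V (projT1 j)) /\
          forall p, Fset L p -> S p).
  assert (FE : forall L, (forall j, In j L -> V (projT1 j)) -> exists p, Fset L p).
  { intros L VL.
    destruct (list_sig _ (fun j => In j L) L (fun t H => H)) as [enum Henum].
    pose (Bi := fun i : {j | In j L} => projT1 (proj1_sig i)).
    pose (bi := fun i : {j | In j L} => projT2 (proj1_sig i) : FreeHom X (Bi i)).
    destruct (image_in_V V Hfin Hsp X _ enum Henum Bi bi (fun i => VL _ (proj2_sig i)))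
      as [HCf VC].
    destruct (H (existT _ (CAlg X Bi bi) (gF X Bi bi)) VC) as [u [v [Hu [Hv Hle]]]].
    exists (u, v). split; [exact Hu|split; [exact Hv|]].
    intros j Hj. pose proof (Hle (exist _ j Hj)) as Hl.
    change (le Xi (Bi (exist _ j Hj)) y (piF X Bi bi (exist _ j Hj) y (gfun X Bi bi y u))
              (piF X Bi bi (exist _ j Hj) y (gfun X Bi bi y v))) in Hl.
    rewrite !(pi_g X _ Bi bi) in Hl. exact Hl. }
  destruct (my_ultra T Filt) as [U [UF [UI [US [UE UU]]]]].
  - exists nil. split; [intros j []|]. intros; exact Logic.I.
  - intros S1 S2 [L1 [V1 H1]] [L2 [V2 H2]]. exists (L1 ++ L2). split.
    + intros j Hj. apply in_app_or in Hj. destruct Hj; auto.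
    + intros p [Hp1 [Hp2 Hp3]]. split.
      * apply H1. split; [exact Hp1|split; [exact Hp2|]]. intros j Hj. apply Hp3. apply in_or_app; auto.
      * apply H2. split; [exact Hp1|split; [exact Hp2|]]. intros j Hj. apply Hp3. apply in_or_app; auto.
  - intros S1 S2 Hsub [L [VL HL]]. exists L. split; [exact VL|]. intros p Hp. apply Hsub, HL, Hp.
  - intros S [L [VL HL]]. destruct (FE L VL) as [p Hp]. exists p. apply HL, Hp.
  - assert (lim_ex : forall (Bt : Type) (f : T -> Bt), (exists l : list Bt, forall b, In b l) ->
              exists b, U (fun p => f p = b)).
    { intros Bt f [l Hl].
      assert (G : forall l, U (fun p => exists b, In b l /\ f p = b) -> exists b, U (fun p => f p = b)).
      { clear Hl. induction l0 as [|b0 l0 IH]; intros Hu.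
        - destruct (UE _ Hu) as [p [b [[] _]]].
        - destruct (UU (fun p => f p = b0)) as [Hb|Hb]; [exists b0; exact Hb|].
          apply IH. refine (US _ _ _ (UI _ _ Hu Hb)). intros p Hp.
          destruct Hp as [[b [[<-|Hb1] Hb2]] Hn]; [contradiction|]. exists b; auto. }
      apply G with l. apply (US (fun _ => True)).
      - intros p _. exists (f p). split; [apply Hl|reflexivity].
      - apply UF. exists nil. split; [intros j []|]. intros; exact Logic.I. }
    assert (lim_uniq : forall (Bt : Type) (f : T -> Bt) b b',
              U (fun p => f p = b) -> U (fun p => f p = b') -> b = b').
    { intros Bt f b b' H1 H2. destruct (UE _ (UI _ _ H1 H2)) as [p [E1 E2]].
      rewrite <- E1, <- E2. reflexivity. }
    assert (mk : forall pr : T -> MO M (DX X) y,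
              {t : hatM M X y | forall B HB (b : FreeHom X B), U (fun p => b y (pr p) = val t HB b)}).
    { intro pr.
      pose (tf := fun (B : Alg M) (HB : finitary B) (b : FreeHom X B) =>
        proj1_sig (constructive_indefinite_description _
                     (lim_ex (B y) (fun p => b y (pr p)) (proj1 HB y)))).
      assert (tf_spec : forall B (HB : finitary B) (b : FreeHom X B), U (fun p => b y (pr p) = tf B HB b)).
      { intros B HB b. unfold tf. destruct (constructive_indefinite_description _ _). simpl. exact u. }
      assert (compat : forall (A0 B : Alg M) (HA : finitary A0) (HB : finitary B)
                (phi : AlgHom A0 B) (b : FreeHom X A0),
                phi y (tf A0 HA b) = tf B HB (compFree phi b)).
      { intros A0 B HA HB phi b.
        apply (lim_uniq _ (fun p => compFree phi b y (pr p))).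
        - apply (US (fun p => b y (pr p) = tf A0 HA b)); [|apply tf_spec].
          intros p Hp. simpl. rewrite Hp. reflexivity.
        - apply tf_spec. }
      exists (exist _ tf compat). intros B HB b. apply tf_spec. }
    destruct (mk fst) as [s Hs]. destruct (mk snd) as [t Ht].
    pose (ineq := {| iX := X; isort := y; ilhs := s; irhs := t |}).
    assert (Ph : PhiV V ineq).
    { intros B HB VB b. simpl in b |- *.
      assert (HF : U (Fset (existT _ B b :: nil))).
      { apply UF. exists (existT _ B b :: nil). split.
        - intros j [<-|[]]. exact VB.
        - intros p Hp; exact Hp. }
      destruct (UE _ (UI _ _ (UI _ _ (Hs B HB b) (Ht B HB b)) HF)) as [p [[E1 E2] [_ [_ H3]]]].
      rewrite <- E1, <- E2. apply (H3 (existT _ B b)). left; reflexivity. }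
    pose proof (SA ineq Ph e) as Hle. simpl in Hle.
    assert (Ea : val s FA e = a).
    { apply (lim_uniq _ (fun p => e y (fst p))); [apply Hs|].
      apply UF. exists nil. split; [intros j []|]. intros p [Hp _]. exact Hp. }
    assert (Ea' : val t FA e = a').
    { apply (lim_uniq _ (fun p => e y (snd p))); [apply Ht|].
      apply UF. exists nil. split; [intros j []|]. intros p [_ [Hp _]]. exact Hp. }
    rewrite Ea, Ea' in Hle. contradiction.
Qed.

Lemma dir1 (V : Alg M -> Prop) (HPV : pseudo_variety V) :
  exists Phi : Ineq M -> Prop, forall A : Alg M, V A <-> Mod Phi A.
Proof.
  exists (PhiV V). intro A. split.
  - intro HA. exists (proj1 HPV A HA). intros e He. apply He. exact HA.
  - intros [FA SA]. destruct HPV as [Hfin [Hq [Hsp Hacc]]].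
    apply Hacc; [exact FA|]. intro D.
    destruct (gens A FA) as [X [e He]].
    pose (lA := fun y => proj1_sig (constructive_indefinite_description _ (proj1 FA y))).
    assert (HlA : forall y a, In a (lA y)).
    { intros y a. unfold lA. destruct (constructive_indefinite_description _ _). simpl. apply i. }
    pose (P := fun p : {y : Xi & (A y * A y)%type} =>
                 In (projT1 p) D /\ ~ le Xi A (projT1 p) (fst (projT2 p)) (snd (projT2 p))).
    destruct (list_sig _ P
      (flat_map (fun y => map (fun ab => existT (fun y => (A y * A y)%type) y ab)
                              (list_prod (lA y) (lA y))) D)) as [enum Henum].
    { intros [y [a a']] [Hy _]. apply in_flat_map. exists y. split; [exact Hy|].
      apply in_map. apply in_prod; apply HlA. }
    pose (sel := fun i : {p | P p} => proj1_sig (constructive_indefinite_description _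
             (KC V Hfin Hsp A FA SA X e (projT1 (proj1_sig i)) (fst (projT2 (proj1_sig i)))
                 (snd (projT2 (proj1_sig i))) (proj2 (proj2_sig i))))).
    assert (sel_spec : forall i, V (projT1 (sel i)) /\
       forall u v, e _ u = fst (projT2 (proj1_sig i)) -> e _ v = snd (projT2 (proj1_sig i)) ->
         ~ le Xi (projT1 (sel i)) _ (projT2 (sel i) _ u) (projT2 (sel i) _ v)).
    { intro i. unfold sel. destruct (constructive_indefinite_description _ _). simpl. exact a. }
    pose (Bi := fun i => projT1 (sel i)).
    pose (bi := fun i => projT2 (sel i) : FreeHom X (Bi i)).
    destruct (image_in_V V Hfin Hsp X _ enum Henum Bi bi (fun i => proj1 (sel_spec i)))
      as [HCf VC].
    exists (CAlg X Bi bi). split; [exact VC|].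
    assert (W : forall z, In z D -> forall u v, (forall i, le Xi (Bi i) z (bi i z u) (bi i z v)) ->
                  le Xi A z (e z u) (e z v)).
    { intros z Hz u v H. apply NNPP; intro N.
      pose (i := exist P (existT (fun y => (A y * A y)%type) z (e z u, e z v)) (conj Hz N)).
      apply ((proj2 (sel_spec i)) u v eq_refl eq_refl). apply (H i). }
    assert (Eq : forall z, In z D -> forall u v, (forall i, bi i z u = bi i z v) -> e z u = e z v).
    { intros z Hz u v H. apply le_antisym; apply W; auto; intro i; rewrite H; apply le_refl. }
    assert (Erep : forall z, In z D -> forall u, e z (rep X Bi bi z (gfun X Bi bi z u)) = e z u).
    { intros z Hz u. apply Eq; [exact Hz|]. intro i.
      change (piF X Bi bi i z (gfun X Bi bi z u) = bi i z u). apply pi_g. }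
    assert (hm : forall z (c c' : restr (CAlg X Bi bi) D z),
        le Xi _ z c c' ->
        le Xi (restr A D) z (exist (fun _ => In z D) (e z (rep X Bi bi z (proj1_sig c))) (proj2_sig c))
                            (exist (fun _ => In z D) (e z (rep X Bi bi z (proj1_sig c'))) (proj2_sig c'))).
    { intros z c c' H. simpl. apply W; [exact (proj2_sig c)|]. exact H. }
    pose (h := Build_SMor Xi (restr (CAlg X Bi bi) D) (restr A D)
                 (fun z c => exist (fun _ => In z D) (e z (rep X Bi bi z (proj1_sig c))) (proj2_sig c)) hm).
    exists h. split.
    + intros x Hx w.
      assert (gm : forall z (u u' : restr (MO M (DX X)) D z), le Xi _ z u u' ->
          le Xi (restr (CAlg X Bi bi) D) z
             (exist (fun _ => In z D) (gfun X Bi bi z (proj1_sig u)) (proj2_sig u))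
             (exist (fun _ => In z D) (gfun X Bi bi z (proj1_sig u')) (proj2_sig u'))).
      { intros z u u' H. simpl. apply (mono Xi _ _ (gS X _ Bi bi)). exact H. }
      pose (gD := Build_SMor Xi (restr (MO M (DX X)) D) (restr (CAlg X Bi bi) D)
            (fun z u => exist (fun _ => In z D) (gfun X Bi bi z (proj1_sig u)) (proj2_sig u)) gm).
      assert (gDs : ssurj gD).
      { intros z [c Hc]. exists (exist _ (rep X Bi bi z c) Hc). simpl.
        rewrite (g_rep X _ Bi bi). reflexivity. }
      destruct (lift_surj _ _ gD gDs x w) as [w' <-].
      pose (zz := Mf M (incl Xi (MO M (DX X)) (fun x _ => In x D)) x w').
      assert (E1 : prod (CAlg X Bi bi) x (Mf M (incl Xi (CAlg X Bi bi) (fun x _ => In x D)) x (Mf M gD x w'))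
                   = gfun X Bi bi x (flat M (DX X) x zz)).
      { rewrite <- Mf_comp.
        transitivity (prod (CAlg X Bi bi) x
           (Mf M (cmp (gS X _ Bi bi) (incl Xi (MO M (DX X)) (fun x _ => In x D))) x w')).
        { f_equal. apply Mf_ext. intros; reflexivity. }
        rewrite Mf_comp. symmetry. apply (gF_spec X _ Bi bi). }
      rewrite E1. change (e x (rep X Bi bi x (gfun X Bi bi x (flat M (DX X) x zz))) = prod A x (Mf M (incl Xi A (fun x _ => In x D)) x (Mf M h x (Mf M gD x w')))). rewrite (Erep x Hx). rewrite fhom_spec.
      unfold zz. rewrite <- !Mf_comp. f_equal. apply Mf_ext.
      intros z [u Hu]. simpl. symmetry. apply Erep. exact Hu.
    + intros z [a Hz]. destruct (He z a) as [u <-].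
      exists (exist _ (gfun X Bi bi z u) Hz). simpl. rewrite (Erep z Hz). reflexivity.
Qed.
End Main.

Theorem theorem7p6 (Xi : Type) (M : Monad Xi) (HM : good_monad M)
  (V : Alg M -> Prop) :
  pseudo_variety V <->
  exists Phi : Ineq M -> Prop, forall A : Alg M, V A <-> Mod Phi A.
Proof.
  destruct HM as [_ [Hs _]]. split.
  - apply dir1. exact Hs.
  - intros [Phi HPhi]. apply (dir2 Xi M Hs V Phi HPhi).
Qed.
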